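(* Let $\mathbf q\in\mathbb Z_{\ge2}^n$. Then for every integer $m\ge2$, the simplex $\Delta_{(1,\mathrm{rs}(\mathbf q,m))}$ does not have the integer decomposition property.
   Context: For $\mathbf p=(p_1,\dots,p_N)\in\mathbb Z_{\ge1}^N$ (entries listed in weakly increasing order), let $\Delta_{(1,\mathbf p)}=\mathrm{conv}\{e_1,\dots,e_N,-\sum_{i=1}^N p_ie_i\}\subset\mathbb R^N$; $\Delta_{(1,\mathbf p)}$ is reflexive if and only if $p_i$ divides $1+\sum_j p_j$ for all $i$. For $\mathbf q\in\mathbb Z_{\ge1}^n$, let $\mathrm{lcm}(\mathbf q)$ be the least common multiple of its entries, and let $\mathrm{rsn}(\mathbf q)$ be the least integer $k\ge0$ such that the vector $(1^k,\mathbf q)$, obtained by prepending $k$ entries equal to $1$ to $\mathbf q$, gives a reflexive simplex. For $m\ge1$, $\mathrm{rs}(\mathbf q,m)=(1^{\mathrm{rsn}(\mathbf q)+(m-1)\mathrm{lcm}(\mathbf q)},\mathbf q)$. A lattice polytope $P\subset\mathbb R^N$ has the integer decomposition property if for every integer $m\ge1$, every point of $mP\cap\mathbb Z^N$ is a sum of $m$ points of $P\cap\mathbb Z^N$. *)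

(* Defs.v *)
From HB Require Import structures.
From mathcomp Require Import all_boot all_order all_algebra.
From mathcomp Require Import reals.
From mathcomp Require Import zify.
Set Implicit Arguments. Unset Strict Implicit. Unset Printing Implicit Defensive.
Import Order.TTheory GRing.Theory Num.Theory.

Definition lcm_seq (q : seq nat) : nat := foldr lcmn 1%N q.

(* Reflexivity criterion from the context: Delta_(1,p) is reflexive iff
   p_i divides 1 + sum_j p_j for all i. *)
Definition reflexive_weights (p : seq nat) : bool :=
  all (fun pi => pi %| (1 + sumn p))%N p.

Definition prepend_ones (k : nat) (q : seq nat) : seq nat := nseq k 1%N ++ q.

Lemma dvdn_lcm_seq (q : seq nat) x : x \in q -> (x %| lcm_seq q)%N.
Proof.
elim: q => [//|y q IH]; rewrite inE /= => /orP [/eqP ->|xq].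
  exact: dvdn_lcml.
exact: dvdn_trans (IH xq) (dvdn_lcmr _ _).
Qed.

(* Totalization: if q has a zero entry no k works; then the predicate below
   is trivially true (garbage value 0). Irrelevant for q in Z_{>=2}^n. *)
Definition rsn_pred (q : seq nat) (k : nat) : bool :=
  reflexive_weights (prepend_ones k q) || (0%N \in q).

Lemma rsn_exists (q : seq nat) : exists k, rsn_pred q k.
Proof.
case: (boolP (0%N \in q)) => q0; first by exists 0%N; rewrite /rsn_pred q0 orbT.
exists ((lcm_seq q).-1 * (1 + sumn q))%N; apply/orP; left.
have lpos : (0 < lcm_seq q)%N.
  rewrite /lcm_seq; elim: q q0 => [//|y q IH] /=; rewrite inE negb_or.
  move/andP=> [y0 qn]; rewrite lcmn_gt0 (IH qn) andbT lt0n eq_sym //.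
apply/allP => x; rewrite /prepend_ones mem_cat => /orP [].
  by rewrite mem_nseq => /andP [_ /eqP ->]; rewrite dvd1n.
move=> xq.
have -> : (1 + sumn (nseq ((lcm_seq q).-1 * (1 + sumn q)) 1 ++ q)
          = lcm_seq q * (1 + sumn q))%N.
  rewrite sumn_cat.
  have -> : forall k, sumn (nseq k 1%N) = k by elim=> //= k ->; rewrite add1n.
  move: lpos; case: (lcm_seq q) => [//|l] _ /=; rewrite mulSn; lia.
by rewrite dvdn_mulr // dvdn_lcm_seq.
Qed.

Definition rsn (q : seq nat) : nat := ex_minn (rsn_exists q).

Definition rs (q : seq nat) (m : nat) : seq nat :=
  prepend_ones (rsn q + (m - 1) * lcm_seq q)%N q.

Local Open Scope ring_scope.

Definition in_conv (R : realType) (N : nat) (V : seq 'rV[R]_N) (x : 'rV[R]_N)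
  : Prop :=
  exists w : 'I_(size V) -> R,
    [/\ forall i, 0 <= w i, \sum_i w i = 1 & x = \sum_i w i *: V`_i].

(* Delta_(1,p) = conv{e_1, ..., e_N, - sum_i p_i e_i} in R^N, N = size p *)
Definition simplex_vertices (R : realType) (p : seq nat) : seq 'rV[R]_(size p) :=
  (\row_(i < size p) - ((nth 0%N p i)%:R : R)) ::
    [seq delta_mx 0 i | i <- enum 'I_(size p)].

Definition Delta (R : realType) (p : seq nat) : 'rV[R]_(size p) -> Prop :=
  in_conv (simplex_vertices R p).

Definition dilate (R : realType) (N : nat) (k : nat) (P : 'rV[R]_N -> Prop)
  (x : 'rV[R]_N) : Prop := exists2 y, P y & x = k%:R *: y.

Definition lat (R : realType) (N : nat) (z : 'rV[int]_N) : 'rV[R]_N :=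
  map_mx (fun a : int => a%:~R) z.

Definition IDP (R : realType) (N : nat) (P : 'rV[R]_N -> Prop) : Prop :=
  forall (m : nat), (1 <= m)%N ->
  forall x : 'rV[int]_N, dilate m P (lat R x) ->
  exists ys : 'I_m -> 'rV[int]_N,
    (forall j, P (lat R (ys j))) /\ x = \sum_j ys j.

(* Main.v *)
Require Import Defs.
From HB Require Import structures.
From mathcomp Require Import all_boot all_order all_algebra.
From mathcomp Require Import reals.
From mathcomp Require Import zify ring.

Set Implicit Arguments. Unset Strict Implicit. Unset Printing Implicit Defensive.
Section Helpers.
Import Order.TTheory GRing.Theory Num.Theory.
Local Open Scope ring_scope.

Lemma term_le (I : finType) (F : I -> int) j :
  (forall i, 0 <= F i) -> F j <= \sum_i F i.
Proof.
move=> H; rewrite (bigD1 j) //= lerDl; exact: sumr_ge0.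
Qed.

Lemma core (N h : nat) (pp : 'I_N -> int) (S c s0 : int) (k0 : 'I_N)
  (xx : 'I_N -> int) (y : 'I_h -> 'I_N -> int) (s : 'I_h -> int) :
  (2 <= h)%N -> 0 < S -> 0 < c -> c * s0 = S -> pp k0 = c ->
  (forall r, s r = 1 - \sum_i y r i) ->
  (forall r, 0 <= s r) -> (forall r i, 0 <= S * y r i + s r * pp i) ->
  \sum_r s r = s0 ->
  (forall i, \sum_r y r i = xx i) ->
  (forall i, c * (S * xx i + s0 * pp i) < S * c) ->
  S * xx k0 + s0 * c = 0 ->
  False.
Proof.
move=> h2 S0 c0 cs pk sE sge Tge ssum ysum Tlt Tk.
have Tsum i : \sum_r (S * y r i + s r * pp i) = S * xx i + s0 * pp i.
  by rewrite big_split /= -mulr_sumr -mulr_suml ysum ssum.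
have Tle r i : S * y r i + s r * pp i < S.
  have := @term_le _ (fun r => S * y r i + s r * pp i) r (fun r => Tge r i).
  rewrite Tsum => le1; have := Tlt i; nia.
have spos r : 0 < s r.
  rewrite lt_def sge andbT; apply/negP => /eqP s0r.
  have yz i : y r i = 0.
    have := Tle r i; have := Tge r i; rewrite s0r mul0r addr0 => a b. nia.
  move: (sE r); rewrite s0r big1 // => i _; exact: yz.
have Tk0 r : S * y r k0 + s r * c = 0.
  rewrite -pk; apply: (psumr_eq0P (P := predT) (F := fun r => S * y r k0 + s r * pp k0)) => //.
  by rewrite Tsum pk.
have big r : S <= c * s r.
  have := Tk0 r; have := spos r => a b.
  have yn : y r k0 <= -1 by nia.
  nia.
have : \sum_(r < h) S <= \sum_r c * s r by apply: ler_sum => r _; exact: big.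
rewrite -mulr_sumr ssum sumr_const card_ord cs.
rewrite -mulr_natr => H.
have : (2%:R : int) <= h%:R by rewrite ler_nat.
nia.
Qed.

Lemma intr_sum (R : pzRingType) (I : finType) (F : I -> int) :
  (\sum_i F i)%:~R = \sum_i (F i)%:~R :> R.
Proof. exact: (big_morph _ (@intrD R) (mulr0z 1)). Qed.

Lemma natz_R (R : pzRingType) (n : nat) : (n%:Z)%:~R = n%:R :> R.
Proof. by []. Qed.

Lemma conv_aff (R : realType) N (V : seq 'rV[R]_N) (a : R) (cc : 'I_N -> R) z :
  (forall v, v \in V -> 0 <= a + \sum_i cc i * v 0 i) ->
  in_conv V z -> 0 <= a + \sum_i cc i * z 0 i.
Proof.
move=> Hv [w [w0 w1 ->]].
have -> : a + \sum_i cc i * (\sum_j w j *: V`_j) 0 i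
        = \sum_j w j * (a + \sum_i cc i * V`_j 0 i).
  under eq_bigr do rewrite summxE.
  under eq_bigr do rewrite mulr_sumr.
  rewrite exchange_big /= -[a in a + _]mul1r -w1 mulr_suml -big_split /=.
  apply: eq_bigr => j _; rewrite mulrDr mulr_sumr; congr (_ + _).
  by apply: eq_bigr => i _; rewrite mxE mulrCA.
apply: sumr_ge0 => j _; apply: mulr_ge0 => //; apply: Hv; apply: mem_nth.
by [].
Qed.

Lemma delta_sum (R : pzRingType) N (cc : 'I_N -> R) (j : 'I_N) :
  \sum_i cc i * (delta_mx 0 j : 'rV[R]_N) 0 i = cc j.
Proof.
rewrite (bigD1 j) //= mxE !eqxx mulr1 big1 ?addr0 // => i ij.
  by rewrite mxE (negbTE ij) mulr0.
Qed.

Lemma delta_sum2 (R : pzRingType) N (cc : 'I_N -> R) (i : 'I_N) :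
  \sum_j cc j * (delta_mx 0 j : 'rV[R]_N) 0 i = cc i.
Proof.
rewrite (bigD1 i) //= mxE !eqxx mulr1 big1 ?addr0 // => j ij.
by rewrite mxE eq_sym (negbTE ij) mulr0.
Qed.

Lemma lin_expand (R : pzRingType) N (A B : R) (k : 'I_N) (v : 'rV[R]_N) :
  \sum_i (A * (i == k)%:R - B) * v 0 i = A * v 0 k - B * \sum_i v 0 i.
Proof.
under eq_bigr do rewrite mulrBl.
rewrite sumrB mulr_sumr; congr (_ - _).
rewrite (bigD1 k) //= eqxx mulr1 big1 ?addr0 // => i /negbTE ik.
by rewrite ik mulr0 mul0r.
Qed.

Lemma sum_nth_sumn (p : seq nat) :
  (\sum_(i < size p) nth 0%N p i)%N = sumn p.
Proof. by rewrite sumnE (big_nth 0%N) big_mkord. Qed.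

Lemma sum_p_R (R : pzRingType) (p : seq nat) :
  \sum_(i < size p) (nth 0%N p i)%:R = (sumn p)%:R :> R.
Proof. by rewrite -natr_sum sum_nth_sumn. Qed.

Lemma vert_cases (R : realType) (p : seq nat) v :
  v \in simplex_vertices R p ->
  v = (\row_(i < size p) - ((nth 0%N p i)%:R : R)) \/
  exists j, v = delta_mx 0 j.
Proof.
rewrite inE => /orP [/eqP ->|/mapP [j _ ->]]; [by left | by right; exists j].
Qed.

Lemma lat_Delta (R : realType) (p : seq nat) (y : 'rV[int]_(size p)) :
  @Delta R p (lat R y) ->
  0 <= 1 - \sum_i y 0 i /\
  forall k, 0 <= (1 + sumn p)%:Z * y 0 k + (1 - \sum_i y 0 i) * (nth 0%N p k)%:Z.
Proof.
move=> H; split.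
  have := conv_aff (a := 1) (cc := fun _ => -1) _ H.
  have -> : 1 + \sum_i (-1) * lat R y 0 i = (1 - \sum_i y 0 i)%:~R :> R.
    rewrite intrD intrN intr_sum -sumrN; congr (_ + _).
    by apply: eq_bigr => i _; rewrite mxE mulN1r.
  rewrite ler0z; apply => v /vert_cases [->|[j ->]].
    under eq_bigr do rewrite mxE mulN1r opprK.
    by rewrite sum_p_R addr_ge0 ?ler01 ?ler0n.
  by rewrite delta_sum addrN.
move=> k.
have := conv_aff (a := (nth 0%N p k)%:R)
   (cc := fun i => (1 + sumn p)%:R * (i == k)%:R - (nth 0%N p k)%:R) _ H.
rewrite lin_expand.
have -> : (nth 0%N p k)%:R + ((1 + sumn p)%:R * lat R y 0 k -
    (nth 0%N p k)%:R * \sum_i lat R y 0 i) =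
    ((1 + sumn p)%:Z * y 0 k + (1 - \sum_i y 0 i) * (nth 0%N p k)%:Z)%:~R :> R.
  rewrite intrD !intrM intrD intrN intr_sum !natz_R mxE.
  have -> : \sum_i lat R y 0 i = \sum_i (y 0 i)%:~R by apply: eq_bigr => i _; rewrite mxE.
  ring.
rewrite ler0z; apply => v /vert_cases [->|[j ->]].
  rewrite lin_expand mxE.
  under eq_bigr do rewrite mxE.
  rewrite sumrN sum_p_R.
  rewrite (_ : _ + _ = 0) //; rewrite natrD; ring.
have s1 : \sum_i (delta_mx 0 j : 'rV[R]_(size p)) 0 i = 1.
  by rewrite -(delta_sum (fun _ => 1) j); apply: eq_bigr => i _; rewrite mul1r.
rewrite lin_expand s1 mulr1 addrC subrK mxE.
by apply: mulr_ge0; rewrite ler0n.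
Qed.

Lemma sum_V (R : realType) (p : seq nat) (T : nmodType) (G : nat -> T) :
  \sum_(j < size (simplex_vertices R p)) G j = G 0%N + \sum_(i < size p) G i.+1.
Proof.
by rewrite -(big_mkord xpredT G) /= size_map size_enum_ord big_nat_recl // big_mkord.
Qed.

Lemma dilate_Delta (R : realType) (p : seq nat) (h : nat) (x : 'rV[int]_(size p)) :
  (0 < h)%N -> 0 <= h%:Z - \sum_i x 0 i ->
  (forall k, 0 <= (1 + sumn p)%:Z * x 0 k + (h%:Z - \sum_i x 0 i) * (nth 0%N p k)%:Z) ->
  dilate h (@Delta R p) (lat R x).
Proof.
move=> h0 s0 Tk.
set s := h%:Z - \sum_i x 0 i in s0 Tk.
have hR0 : (h%:R : R) != 0 by rewrite pnatr_eq0 -lt0n.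
have SR0 : ((1 + sumn p)%:R : R) != 0 by rewrite pnatr_eq0.
pose a0 : R := s%:~R / (h%:R * (1 + sumn p)%:R).
pose a (i : 'I_(size p)) : R := h%:R^-1 * (x 0 i)%:~R + a0 * (nth 0%N p i)%:R.
have a0ge : 0 <= a0 by apply: divr_ge0; rewrite ?ler0z // mulr_ge0 ?ler0n.
have age i : 0 <= a i.
  have -> : a i = ((1 + sumn p)%:Z * x 0 i + s * (nth 0%N p i)%:Z)%:~R
                 / (h%:R * (1 + sumn p)%:R).
    rewrite /a /a0 [in RHS]intrD ![in RHS]intrM !natz_R; field.
    rewrite hR0 andbT; move: SR0; rewrite natrD; exact: id.
  by apply: divr_ge0; rewrite ?ler0z // mulr_ge0 ?ler0n.
have nthA (i : 'I_(size p)) :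
    nth 0 [seq a i | i <- enum 'I_(size p)] i = a i.
  by rewrite (nth_map i) ?size_enum_ord // nth_ord_enum.
exists (h%:R^-1 *: lat R x); last by rewrite scalerA mulfV ?scale1r.
exists (fun j => nth 0 (a0 :: [seq a i | i <- enum 'I_(size p)]) j); split.
- case=> [[|n] /= _] //.
  case: (ltnP n (size [seq a i | i <- enum 'I_(size p)])) => [lt|ge].
    by have /mapP [i _ ->] := mem_nth 0 lt.
  by rewrite nth_default.
- rewrite sum_V /=.
  under eq_bigr do rewrite nthA.
  rewrite big_split /= -!mulr_sumr sum_p_R -intr_sum.
  have -> : (\sum_i x 0 i)%:~R = h%:R - s%:~R :> R.
    by rewrite /s intrD intrN natz_R opprB addrC subrK.
  rewrite /a0 natrD; field.
  rewrite hR0 andbT; move: SR0; rewrite natrD; exact: id.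
- rewrite (@sum_V R p _ (fun j => nth 0 (a0 :: [seq a i | i <- enum 'I_(size p)]) j *: (simplex_vertices R p)`_j)) /=.
  under eq_bigr => i _ do rewrite nthA /= (nth_map i) ?size_enum_ord // nth_ord_enum.
  apply/rowP => i; rewrite !mxE summxE.
  under eq_bigr do rewrite mxE.
  rewrite delta_sum2 /a; ring.
Qed.

Lemma posz_sum (I : finType) (F : I -> nat) :
  ((\sum_i F i)%N)%:Z = \sum_i (F i)%:Z.
Proof. exact: (big_morph _ PoszD (erefl _)). Qed.

Lemma notIDP_gen (R : realType) (p : seq nat) (k0 : 'I_(size p)) (c s0 : nat) :
  (1 <= c)%N -> nth 0%N p k0 = c -> (c * s0 = 1 + sumn p)%N ->
  (c <= \sum_(i < size p) (nth 0%N p i %% c))%N -> ~ IDP (@Delta R p).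
Proof.
move=> c1 pk cs Rbig IDPp.
set D := (\sum_(i < size p) (nth 0%N p i %/ c))%N.
set Rr := (\sum_(i < size p) (nth 0%N p i %% c))%N in Rbig.
have sumE : sumn p = (c * D + Rr)%N.
  rewrite -sum_nth_sumn /D /Rr big_distrr -big_split /=.
  by apply: eq_bigr => i _; rewrite mulnC -divn_eq.
have h2 : (2 <= s0 - D)%N by nia.
set h := (s0 - D)%N in h2.
pose x : 'rV[int]_(size p) := \row_i (- ((nth 0%N p i %/ c)%N)%:Z).
have sx : \sum_i x 0 i = - D%:Z.
  under eq_bigr do rewrite mxE.
  by rewrite sumrN /D posz_sum.
have divE (i : 'I_(size p)) : (nth 0%N p i = c * (nth 0%N p i %/ c) + nth 0%N p i %% c)%N.
  by rewrite mulnC -divn_eq.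
have modlt (i : 'I_(size p)) : (nth 0%N p i %% c < c)%N by rewrite ltn_mod.
have hs : h%:Z - \sum_i x 0 i = s0%:Z by rewrite sx /h; lia.
have Tx k : c%:Z * ((1 + sumn p)%:Z * x 0 k + s0%:Z * (nth 0%N p k)%:Z)
       = (1 + sumn p)%:Z * (nth 0%N p k %% c)%N%:Z.
  rewrite mxE; have := divE k; have := cs; lia.
have Hd : dilate h (@Delta R p) (lat R x).
  apply: dilate_Delta; first lia.
    by rewrite hs.
  move=> k; rewrite hs; have := Tx k; nia.
have [ys [ysD xE]] := IDPp h ltac:(lia) x Hd.
apply: (@core (size p) h (fun i => (nth 0%N p i)%:Z) (1 + sumn p)%:Z c%:Z s0%:Z k0
   (fun i => x 0 i) (fun r i => ys r 0 i) (fun r => 1 - \sum_i ys r 0 i)).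
- by [].
- lia.
- lia.
- lia.
- by rewrite pk.
- by [].
- by move=> r; case: (lat_Delta (ysD r)).
- by move=> r i; case: (lat_Delta (ysD r)).
- rewrite sumrB sumr_const card_ord exchange_big /=.
  have -> : \sum_i \sum_r ys r 0 i = \sum_i x 0 i.
    by apply: eq_bigr => i _; rewrite xE summxE.
  by rewrite -hs -[in RHS]natz.
- by move=> i; rewrite xE summxE.
- move=> i; rewrite Tx; have := modlt i; nia.
- rewrite mxE pk divnn c1 /=; have := cs; lia.
Qed.
End Helpers.

Lemma lcm_seq_gt0 (q : seq nat) : 0 \notin q -> 0 < lcm_seq q.
Proof.
elim: q => [//|y q IH] /=; rewrite inE negb_or => /andP [y0 qn].
by rewrite lcmn_gt0 (IH qn) andbT lt0n eq_sym.
Qed.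

Unset Implicit Arguments.
Theorem theorem5p4 (R : realType) (q : seq nat) :
  q != [::] -> all (fun qi => 2 <= qi) q ->
  forall m : nat, 2 <= m -> ~ IDP (@Delta R (rs q m)).
Proof.
case: q => [//|c q'] _ Hall m m2.
set q := c :: q'.
have c2 : 2 <= c by move: Hall => /andP [].
have q0 : 0 \notin q.
  apply/negP => /(allP Hall); by [].
have cq : c \in q by rewrite inE eqxx.
rewrite /rs /rsn; case: ex_minnP => k Hk _.
move: Hk; rewrite /rsn_pred (negbTE q0) orbF => Hrefl.
have cdiv0 : c %| 1 + sumn (prepend_ones k q) by move/allP: Hrefl; apply; rewrite /prepend_ones mem_cat cq orbT.
set L := lcm_seq q.
have cL : c %| L by apply: dvdn_lcm_seq.
have L0 : 0 < L by apply: lcm_seq_gt0.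
have cleL : c <= L by apply: dvdn_leq.
set kk := k + (m - 1) * L.
set p := prepend_ones kk q.
have sp : size p = kk + size q by rewrite /p /prepend_ones size_cat size_nseq.
have sumnp : sumn p = kk + sumn q by rewrite /p /prepend_ones sumn_cat sumn_nseq mul1n.
have cdiv : c %| 1 + sumn p.
  move: cdiv0; rewrite sumnp /prepend_ones sumn_cat sumn_nseq mul1n /kk.
  have -> : 1 + (k + (m - 1) * L + sumn q) = (1 + (k + sumn q)) + (m - 1) * L by lia.
  by move=> H; rewrite dvdn_add // dvdn_mull.
have kklt : kk < size p by rewrite sp /q /=; lia.
apply: (@notIDP_gen R p (Ordinal kklt) c ((1 + sumn p) %/ c)).
- lia.
- by rewrite /= /p /prepend_ones nth_cat size_nseq ltnn subnn.
- by rewrite mulnC divnK.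
- rewrite -(big_mkord xpredT (fun i => nth 0 p i %% c)) -(big_nth 0 xpredT (fun x => x %% c)).
  rewrite /p /prepend_ones big_cat /= big_nseq iter_addn_0 modn_small //.
  have : (m - 1) * L >= L by rewrite leq_pmull //; lia.
  rewrite /kk; lia.
Qed.
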